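(* Let $(\mathcal{C},V^-,\iota)$ be a pre-Clifford modular tensor category with quantum dimension of $V^-$ equal to $1$. Let $R^0$ be the set of labels fixed by the involution $i\mapsto\overline{i}$ (all of which are R), let $NS^+$ be a set of representatives of the orbits of this involution on NS labels, and $R^+$ a set of representatives of the free orbits on R labels. Define the matrices $A=(s_{ij})_{i,j\in NS^+}$, $B=(s_{ij})_{i\in NS^+,j\in R^+}$, $C=(s_{ij})_{i,j\in R^+}$, $D=(s_{ij})_{i\in NS^+,j\in R^0}$. Then $A$ and $C$ are symmetric and nonsingular, $|R^+|+|R^0|=|NS^+|$, the square matrix $(B\ \ D)$ is nonsingular, and $B^TD=0$.
   Context: A modular tensor category $\mathcal{C}$ is a semisimple ribbon category over $\mathbb{C}$ with finitely many isomorphism classes of simple objects, braiding $\sigma$, twist $\theta$ with $\theta_{X\boxtimes Y}=\sigma_{Y,X}\sigma_{X,Y}(\theta_X\boxtimes\theta_Y)$, whose $s$-matrix $s_{ij}=\theta_i^{-1}\theta_j^{-1}\sum_kN_{ij}^k\theta_kd_k$ (indexed by labels = isomorphism classes of simple objects; $\theta_i$ twist scalar, $d_k$ quantum dimension, $N_{ij}^k$ fusion multiplicities) is symmetric, nonsingular, and has square a scalar multiple of the charge conjugation matrix (the permutation matrix of $i\mapsto$ dual label). A pre-Clifford modular tensor category is such $\mathcal{C}$ with an object $V^-$ and an isomorphism $\iota:V^-\boxtimes V^-\cong1$ such that $\theta_{V^-}=-\mathrm{Id}$. The involution $\overline{i}$ sends the class of $X$ to the class of $V^-\boxtimes X$.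 A simple $X$ is NS if $\sigma_{V^-,X}\sigma_{X,V^-}=1$ and R if it equals $-1$. *)

(* Defs.v *)
From HB Require Import structures.
From mathcomp Require Import all_boot all_order all_algebra all_field.
Set Implicit Arguments. Unset Strict Implicit. Unset Printing Implicit Defensive.
Import Order.TTheory GRing.Theory Num.Theory.
Local Open Scope ring_scope.

Definition smat_of (n : nat) (N : 'I_n -> 'I_n -> 'I_n -> nat)
  (theta qdim : 'I_n -> algC) : 'M[algC]_n :=
  \matrix_(i, j) ((theta i)^-1 * (theta j)^-1 *
                  \sum_(k < n) (N i j k)%:R * theta k * qdim k).

Definition chargemx (n : nat) (dual : 'I_n -> 'I_n) : 'M[algC]_n :=
  \matrix_(i, j) (j == dual i)%:R.

(* The label-level data of a pre-Clifford modular tensor category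
   (C, V^-, iota): labels are 'I_n (isomorphism classes of simples),
   N = fusion multiplicities, theta = twist scalars, qdim = quantum dims,
   dual = duality on labels, one = unit label, vminus = class of V^-,
   bar i = class of V^- (x) X_i, mono i = scalar of the monodromy
   sigma_{V^-,X_i} sigma_{X_i,V^-}.  The fields below are the facts about
   these data that hold in every such category. *)
Record preClifford (n : nat) := PreClifford {
  N : 'I_n -> 'I_n -> 'I_n -> nat;
  theta : 'I_n -> algC;
  qdim : 'I_n -> algC;
  dual : 'I_n -> 'I_n;
  one : 'I_n;
  vminus : 'I_n;
  bar : 'I_n -> 'I_n;
  mono : 'I_n -> algC;
  N_unit : forall i k, N one i k = (k == i) :> nat;
  N_assoc : forall a b c k,
    (\sum_(m < n) N a b m * N m c k = \sum_(m < n) N b c m * N a m k)%N;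
  theta_neq0 : forall i, theta i != 0;
  dual_invol : forall i, dual (dual i) = i;
  s_sym : (smat_of N theta qdim)^T = smat_of N theta qdim;
  s_unit : smat_of N theta qdim \in unitmx;
  s_sq : exists c : algC,
    smat_of N theta qdim *m smat_of N theta qdim = c *: chargemx dual;
  (* V^- : iota : V^- (x) V^- ~= 1, theta_{V^-} = -Id *)
  iota_fusion : forall k, N vminus vminus k = (k == one) :> nat;
  theta_vminus : theta vminus = -1;
  bar_fusion : forall i k, N vminus i k = (k == bar i) :> nat;
  dual_bar : forall i, dual (bar i) = bar (dual i);
  qdim_bar : forall i, qdim (bar i) = qdim vminus * qdim i;
  (* monodromy with the invertible order-2 object V^- is +-1 on simples *)
  mono_sq : forall i, mono i ^+ 2 = 1;
  (* monodromy with V^- is multiplicative along fusion (hexagon) *)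
  mono_fusion : forall i j k, (N i j k != 0)%N -> mono k = mono i * mono j;
  (* balancing: theta_{V^- (x) X} = sigma sigma (theta_{V^-} (x) theta_X) *)
  theta_bar : forall i, theta (bar i) = mono i * theta vminus * theta i
}.

Definition smat n (C : preClifford n) : 'M[algC]_n :=
  smat_of (N C) (theta C) (qdim C).

Definition isNS n (C : preClifford n) (i : 'I_n) : bool := mono C i == 1.
Definition isR n (C : preClifford n) (i : 'I_n) : bool := mono C i == -1.

Definition R0set n (C : preClifford n) : {set 'I_n} := [set i | bar C i == i].

Definition NSreps n (C : preClifford n) (X : {set 'I_n}) : Prop :=
  (forall i, i \in X -> isNS C i) /\
  (forall i, isNS C i -> #|X :&: [set i; bar C i]| = 1%N).

Definition Rreps n (C : preClifford n) (X : {set 'I_n}) : Prop :=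
  (forall i, i \in X -> isR C i && (bar C i != i)) /\
  (forall i, isR C i -> bar C i != i -> #|X :&: [set i; bar C i]| = 1%N).

Definition subS n (C : preClifford n) (X Y : {set 'I_n}) : 'M[algC]_(#|X|, #|Y|) :=
  \matrix_(a, b) smat C (enum_val a) (enum_val b).

(* Main.v *)
Require Import Defs.
From HB Require Import structures.
From mathcomp Require Import all_boot all_order all_algebra all_field.
From mathcomp Require Import ring.
Set Implicit Arguments. Unset Strict Implicit. Unset Printing Implicit Defensive.
Import Order.TTheory GRing.Theory Num.Theory.
Local Open Scope ring_scope.

Lemma bar_invol n (C : preClifford n) i : bar C (bar C i) = i.
Proof.
have := N_assoc C (vminus C) (vminus C) i i.
under eq_bigr => m _ do rewrite iota_fusion.
under [X in _ = X]eq_bigr => m _ do rewrite bar_fusion bar_fusion.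
rewrite (bigD1 (Defs.one C)) //= big1 ?addn0; last by move=> m /negbTE ->; rewrite mul0n.
rewrite eqxx mul1n N_unit eqxx.
rewrite (bigD1 (bar C i)) //= big1 ?addn0; last by move=> m /negbTE ->; rewrite mul0n.
by rewrite eqxx mul1n; case: eqP.
Qed.

Lemma bar_inj n (C : preClifford n) : injective (bar C).
Proof. exact: (can_inj (@bar_invol n C)). Qed.

Lemma N_bar n (C : preClifford n) i j k : N C (bar C i) j k = N C i j (bar C k).
Proof.
have := N_assoc C (vminus C) i j k.
under eq_bigr => m _ do rewrite bar_fusion.
under [X in _ = X]eq_bigr => m _ do rewrite bar_fusion.
rewrite (bigD1 (bar C i)) //= big1 ?addn0; last by move=> m /negbTE ->; rewrite mul0n.
rewrite eqxx mul1n => ->.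
rewrite (bigD1 (bar C k)) //= big1 ?addn0 ?bar_invol ?eqxx ?muln1 //.
move=> m Hm; case: eqP => [Ek|]; last by rewrite muln0.
by move: Hm; rewrite Ek bar_invol eqxx.
Qed.

Lemma mono_pm n (C : preClifford n) i : (mono C i == 1) || (mono C i == -1).
Proof.
have := mono_sq C i. move/eqP; rewrite -subr_eq0 subr_sqr_1 mulf_eq0 subr_eq0 addr_eq0.
by [].
Qed.

Lemma mono_neq0 n (C : preClifford n) i : mono C i != 0.
Proof. by case/orP: (mono_pm C i) => /eqP ->; rewrite ?oppr_eq0 oner_eq0. Qed.

Lemma mono_inv n (C : preClifford n) i : (mono C i)^-1 = mono C i.
Proof. by case/orP: (mono_pm C i) => /eqP ->; rewrite ?invrN invr1. Qed.

Lemma bar_vminus n (C : preClifford n) : bar C (vminus C) = Defs.one C.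
Proof.
have := iota_fusion C (Defs.one C); rewrite bar_fusion eqxx.
by case: eqP.
Qed.

Lemma bar_one n (C : preClifford n) : bar C (Defs.one C) = vminus C.
Proof. by rewrite -bar_vminus bar_invol. Qed.

Lemma mono_one n (C : preClifford n) : mono C (Defs.one C) = 1.
Proof.
have H : (N C (Defs.one C) (Defs.one C) (Defs.one C) != 0)%N by rewrite N_unit eqxx.
have h := mono_fusion H; apply: (mulfI (mono_neq0 C (Defs.one C))).
by rewrite mulr1 -h.
Qed.

Lemma theta_one n (C : preClifford n) : theta C (Defs.one C) = 1.
Proof.
have := theta_bar C (Defs.one C); rewrite bar_one theta_vminus mono_one mul1r.
move=> h; have nz : (-1 : algC) != 0 by rewrite oppr_eq0 oner_eq0.
by apply: (mulfI nz); rewrite mulr1 -h.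
Qed.

Lemma mono_vminus n (C : preClifford n) : mono C (vminus C) = 1.
Proof.
have := theta_bar C (vminus C); rewrite bar_vminus theta_one theta_vminus.
by rewrite -mulrA mulrNN !mulr1 => <-.
Qed.

Lemma mono_bar n (C : preClifford n) i : mono C (bar C i) = mono C i.
Proof.
have H : (N C (vminus C) i (bar C i) != 0)%N by rewrite bar_fusion eqxx.
by rewrite (mono_fusion H) mono_vminus mul1r.
Qed.

Lemma fixed_R n (C : preClifford n) i : bar C i = i -> mono C i = -1.
Proof.
move=> h; have := theta_bar C i; rewrite h theta_vminus mulrN1 => E.
apply: (mulIf (theta_neq0 C i)).
by rewrite mulN1r {2}E mulNr opprK.
Qed.

Lemma sE n (C : preClifford n) i j : smat C i j =
  (theta C i)^-1 * (theta C j)^-1 *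
  \sum_(k < n) (N C i j k)%:R * theta C k * qdim C k.
Proof. by rewrite /smat /smat_of mxE. Qed.

Lemma s_symE n (C : preClifford n) i j : smat C i j = smat C j i.
Proof. by rewrite /smat -[in LHS](s_sym C) mxE. Qed.

Lemma s_bar_l n (C : preClifford n) i j : qdim C (vminus C) = 1 ->
  smat C (bar C i) j = mono C j * smat C i j.
Proof.
move=> hd; rewrite !sE.
under eq_bigr => k _ do rewrite N_bar.
rewrite (reindex_inj (@bar_inj n C)) /=.
under eq_bigr => k _ do rewrite bar_invol theta_bar qdim_bar hd mul1r theta_vminus.
have -> : \sum_(k < n) (N C i j k)%:R * (mono C k * -1 * theta C k) * qdim C k =
   - (mono C i * mono C j) * \sum_(k < n) (N C i j k)%:R * theta C k * qdim C k.
  rewrite mulr_sumr; apply: eq_bigr => k _.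
  have [h0|hn] := eqVneq (N C i j k) 0%N; first by rewrite h0 !mul0r mulr0.
  rewrite (mono_fusion hn); ring.
rewrite theta_bar theta_vminus.
have h1 := mono_neq0 C i; have h2 := theta_neq0 C i.
field; by rewrite h1 h2 theta_neq0.
Qed.

Lemma s_bar_r n (C : preClifford n) i j : qdim C (vminus C) = 1 ->
  smat C i (bar C j) = mono C i * smat C i j.
Proof. by move=> hd; rewrite s_symE s_bar_l // s_symE. Qed.

Lemma sum_delta n (a : 'I_n) (F : 'I_n -> algC) :
  \sum_(k < n) (k == a)%:R * F k = F a.
Proof.
rewrite (bigD1 a) //= big1 ?addr0 ?eqxx ?mul1r // => k /negbTE ->.
by rewrite mul0r.
Qed.

Lemma row_nz n (C : preClifford n) i : exists j, smat C i j != 0.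
Proof.
case: (pickP (fun j => smat C i j != 0)) => [j hj|H]; first by exists j.
have := mulmxV (s_unit C) => /matrixP /(_ i i).
rewrite !mxE eqxx /= big1 => [|k _]; last by have := H k; move/negbFE/eqP; rewrite /smat => ->; rewrite mul0r.
by move/eqP; rewrite eq_sym oner_eq0.
Qed.

Lemma s_sq_c n (C : preClifford n) : exists c : algC, c != 0 /\
  forall i j, \sum_(k < n) smat C i k * smat C k j = c * (j == dual C i)%:R.
Proof.
have [c hc] := s_sq C.
have E i j : \sum_(k < n) smat C i k * smat C k j = c * (j == dual C i)%:R.
  by have := congr1 (fun M : 'M_n => M i j) hc; rewrite !mxE.
exists c; split => //; apply/eqP => c0.
have [j hj] := row_nz C (Defs.one C).
have : smat C = 0.
  rewrite -[smat C]mulmx1 -(mulmxV (s_unit C)) mulmxA.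
  by rewrite /smat hc c0 scale0r mul0mx.
by move=> h; move: hj; rewrite h mxE eqxx.
Qed.

Lemma chargeR n (M : 'M[algC]_n) (d : 'I_n -> 'I_n) i j :
  (forall k, d (d k) = k) -> (M *m chargemx d) i j = M i (d j).
Proof.
move=> dd; rewrite mxE.
under eq_bigr => k _ do rewrite mxE.
rewrite -(sum_delta (d j) (fun k => M i k)); apply: eq_bigr => k _.
rewrite mulrC; congr (_%:R * _); case: eqP => [->|h]; first by rewrite dd eqxx.
case: eqP => // e; case: h; by rewrite e dd.
Qed.

Lemma chargeL n (M : 'M[algC]_n) (d : 'I_n -> 'I_n) i j :
  (chargemx d *m M) i j = M (d i) j.
Proof.
rewrite mxE.
under eq_bigr => k _ do rewrite mxE.
by rewrite sum_delta.
Qed.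

Lemma s_dual n (C : preClifford n) i j : smat C (dual C i) j = smat C i (dual C j).
Proof.
have [c' hc] := s_sq C.
have [c'0|c'0] := eqVneq c' 0.
  exfalso; have [k hk] := row_nz C i.
  have : smat C = 0.
    rewrite -[smat C]mulmx1 -(mulmxV (s_unit C)) mulmxA.
    by rewrite /smat hc c'0 scale0r mul0mx.
  by move=> h; move: hk; rewrite h mxE eqxx.
have e1 : smat C *m (smat C *m smat C) = (smat C *m smat C) *m smat C by rewrite mulmxA.
move: e1; rewrite /smat hc -scalemxAr -scalemxAl => /(scalerI c'0) e2.
have := congr1 (fun M : 'M_n => M i j) e2.
by rewrite chargeR ?chargeL //; apply: dual_invol.
Qed.

Lemma mono_dual n (C : preClifford n) i : qdim C (vminus C) = 1 ->
  mono C (dual C i) = mono C i.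
Proof.
move=> hd; have [j hj] := row_nz C (dual C i).
apply: (mulIf hj).
by rewrite -s_bar_r // s_dual dual_bar s_bar_r // -s_dual.
Qed.

Lemma card_pair (T : finType) (X : {set T}) x y : x != y ->
  #|X :&: [set x; y]| = ((x \in X) + (y \in X))%N.
Proof.
move=> nxy; have nyx : y != x by rewrite eq_sym.
have E : X :&: [set x; y] = [set z | ((z == x) && (x \in X)) || ((z == y) && (y \in X))].
  apply/setP => z; rewrite !inE.
  have [->|zx] := eqVneq z x; first by rewrite (negbTE nxy) /= andbT orbF.
  have [->|zy] := eqVneq z y; first by rewrite /= andbT.
  by rewrite andbF.
rewrite E; case hx: (x \in X); case hy: (y \in X).
- by rewrite (_ : [set z | _] = [set x; y]) ?cards2 ?nxy //; apply/setP => z; rewrite !inE !andbT.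
- by rewrite (_ : [set z | _] = [set x]) ?cards1 //; apply/setP => z; rewrite !inE !andbT andbF orbF.
- by rewrite (_ : [set z | _] = [set y]) ?cards1 //; apply/setP => z; rewrite !inE !andbT andbF.
- by rewrite (_ : [set z | _] = set0) ?cards0 //; apply/setP => z; rewrite !inE !andbF.
Qed.


Lemma sum_reps n (C : preClifford n) (S : pred 'I_n) (X : {set 'I_n}) (g : 'I_n -> algC) :
  (forall x, x \in X -> S x) ->
  (forall x, S x -> S (bar C x)) ->
  (forall x, S x -> bar C x != x) ->
  (forall x, S x -> #|X :&: [set x; bar C x]| = 1%N) ->
  (forall k, g (bar C k) = g k) ->
  \sum_(k | S k) g k = 2 * \sum_(k in X) g k.
Proof.
move=> hX hS hfix hrep hg.
rewrite (bigID (fun k => k \in X)) /=.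
have -> : \sum_(i | S i && (i \in X)) g i = \sum_(k in X) g k.
  by apply: eq_bigl => k; apply/andP/idP => [[]//|kX]; split => //; apply: hX.
have -> : \sum_(i | S i && (i \notin X)) g i = \sum_(k in X) g k.
  rewrite (reindex_inj (@bar_inj n C)) /=.
  apply: eq_big => k; last by move=> _; apply: hg.
  apply/andP/idP => [[Sb nX]|kX].
    have Sk : S k by rewrite -[k](bar_invol C) hS.
    have := hrep k Sk; rewrite card_pair ?(negbTE nX) ?addn0; last by rewrite eq_sym hfix.
    by case: (k \in X).
  have Sk := hX k kX; split; first exact: hS.
  have := hrep k Sk; rewrite card_pair ?kX; last by rewrite eq_sym hfix.
  by case: (bar C k \in X).
by rewrite mulr2n mulrDl mul1r.
Qed.

Lemma two_neq0 : (2 : algC) != 0.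
Proof. by rewrite pnatr_eq0. Qed.

Lemma s_fixed0 n (C : preClifford n) i k : qdim C (vminus C) = 1 ->
  mono C i = -1 -> bar C k = k -> smat C i k = 0.
Proof.
move=> hd hi hk; have := @s_bar_r n C i k hd; rewrite hk hi mulN1r => /eqP.
by rewrite -subr_eq0 opprK -mulr2n -mulr_natr mulf_eq0 (negbTE two_neq0) orbF => /eqP.
Qed.

Lemma split_sums n (C : preClifford n) (c : algC) i j :
  qdim C (vminus C) = 1 ->
  (forall i j, \sum_(k < n) smat C i k * smat C k j = c * (j == dual C i)%:R) ->
  \sum_(k | isNS C k) smat C i k * smat C k j
     = c / 2 * ((j == dual C i)%:R + (bar C j == dual C i)%:R) /\
  \sum_(k | isR C k) smat C i k * smat C k j
     = c / 2 * ((j == dual C i)%:R - (bar C j == dual C i)%:R).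
Proof.
move=> hd E.
have T2 : \sum_(k < n) mono C k * (smat C i k * smat C k j) = c * (bar C j == dual C i)%:R.
  rewrite -E; apply: eq_bigr => k _; rewrite s_bar_r //; ring.
have hP : \sum_(k | isNS C k) smat C i k * smat C k j
        + \sum_(k | ~~ isNS C k) smat C i k * smat C k j = c * (j == dual C i)%:R.
  by rewrite -E [in RHS](bigID (isNS C)).
have hM : \sum_(k | isNS C k) smat C i k * smat C k j
        - \sum_(k | ~~ isNS C k) smat C i k * smat C k j = c * (bar C j == dual C i)%:R.
  rewrite -T2 [in RHS](bigID (isNS C)) /= -sumrN; congr (_ + _).
    by apply: eq_bigr => k /eqP ->; rewrite mul1r.
  apply: eq_bigr => k; rewrite /isNS => hk.
  by have := mono_pm C k; rewrite (negbTE hk) /= => /eqP ->; rewrite mulN1r.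
have eR : \sum_(k | isR C k) smat C i k * smat C k j = \sum_(k | ~~ isNS C k) smat C i k * smat C k j.
  apply: eq_bigl => k; rewrite /isR /isNS.
  have := mono_pm C k; case/orP => /eqP ->; rewrite ?eqxx //.
    by rewrite -subr_eq0 opprK (_ : 1 + 1 = 2 :> algC) // (negbTE two_neq0).
  by rewrite -subr_eq0 -opprD oppr_eq0 (negbTE two_neq0).
rewrite eR; have h2 := two_neq0.
move: hP hM; set x := \sum_(k | isNS C k) _; set y := \sum_(k | ~~ isNS C k) _.
set a := (j == dual C i)%:R; set b := (bar C j == dual C i)%:R => hP hM.
have -> : x = (c * a + c * b) / 2 by rewrite -hP -hM; field.
have -> : y = (c * a - c * b) / 2 by rewrite -hP -hM; field.
by split; field.
Qed.

Lemma g_inv n (C : preClifford n) i j k : qdim C (vminus C) = 1 ->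
  mono C i * mono C j = 1 ->
  smat C i (bar C k) * smat C (bar C k) j = smat C i k * smat C k j.
Proof.
move=> hd hm; rewrite s_bar_r // s_bar_l //.
rewrite [LHS](_ : _ = (mono C i * mono C j) * (smat C i k * smat C k j)); [by rewrite hm mul1r | ring].
Qed.

Lemma NS_sum n (C : preClifford n) (c : algC) (X : {set 'I_n}) i j :
  qdim C (vminus C) = 1 ->
  (forall i j, \sum_(k < n) smat C i k * smat C k j = c * (j == dual C i)%:R) ->
  NSreps C X -> mono C i * mono C j = 1 ->
  \sum_(k in X) smat C i k * smat C k j
     = c / 4 * ((j == dual C i)%:R + (bar C j == dual C i)%:R).
Proof.
move=> hd E [hX hrep] hm.
have [h1 _] := split_sums i j hd E.
rewrite (@sum_reps n C (isNS C) X) in h1 => //.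
- move: h1; set x := \sum_(k in X) _ => h1.
  have -> : x = (2 * x) / 2 by field.
  rewrite h1 (_ : 4 = 2 * 2 :> algC); last by rewrite -natrM.
  by field.
- by move=> x; rewrite /isNS mono_bar.
- move=> x; rewrite /isNS => /eqP h; apply/eqP => hb.
  by move: h; rewrite fixed_R // => /eqP; rewrite -subr_eq0 -opprD oppr_eq0 (_ : 1 + 1 = 2 :> algC) // (negbTE two_neq0).
- by move=> k; exact: (g_inv _ hd hm).
Qed.

Lemma R_sum n (C : preClifford n) (c : algC) (X : {set 'I_n}) i j :
  qdim C (vminus C) = 1 ->
  (forall i j, \sum_(k < n) smat C i k * smat C k j = c * (j == dual C i)%:R) ->
  Rreps C X -> mono C i * mono C j = 1 ->
  2 * \sum_(k in X) smat C i k * smat C k j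
    + \sum_(k in R0set C) smat C i k * smat C k j
     = c / 2 * ((j == dual C i)%:R - (bar C j == dual C i)%:R).
Proof.
move=> hd E [hX hrep] hm.
have [_ h1] := split_sums i j hd E.
rewrite -h1 [in RHS](bigID (fun k => bar C k != k)) /=.
congr (_ + _).
  rewrite (@sum_reps n C (fun k => isR C k && (bar C k != k)) X) //.
  - by move=> x /andP [hx hb]; rewrite /isR mono_bar -/(isR C x) hx /= bar_invol eq_sym.
  - by move=> x /andP []; rewrite eq_sym.
  - by move=> x /andP []; apply: hrep.
  - by move=> k; exact: (g_inv _ hd hm).
apply: eq_bigl => k; rewrite /R0set inE negbK.
by apply/idP/andP => [hk|[]//]; split => //; rewrite /isR fixed_R //; apply/eqP.
Qed.

Lemma gperm_unit m (G : 'M[algC]_m) :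
  (forall a, exists b, G a b != 0) ->
  (forall a b b', G a b != 0 -> G a b' != 0 -> b = b') ->
  (forall a a' b, G a b != 0 -> G a' b != 0 -> a = a') -> G \in unitmx.
Proof.
move=> hex hrow hcol.
have fe a : {b | G a b != 0}.
  apply: sigW; exact: hex.
pose f a := sval (fe a).
have hf a : G a (f a) != 0 by rewrite /f; case: (fe a).
pose H := \matrix_(b, a) (if b == f a then (G a b)^-1 else 0).
have /mulmx1_unit [] // : G *m H = 1%:M.
apply/matrixP => a a'; rewrite !mxE.
rewrite (bigD1 (f a')) //= big1 ?addr0 => [|b hb]; last by rewrite mxE (negbTE hb) mulr0.
rewrite mxE eqxx.
have [->|naa] := eqVneq a a'; first by rewrite mulfV.
have : G a (f a') == 0.
  apply/negPn/negP => h; move/eqP: naa; apply; exact: hcol h (hf a').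
by move/eqP ->; rewrite mul0r.
Qed.

Lemma rep_uniq n (C : preClifford n) (S : pred 'I_n) (X : {set 'I_n}) y z z' :
  (forall x, S x -> #|X :&: [set x; bar C x]| = 1%N) -> S y ->
  z \in X -> z' \in X -> (z == y) || (z == bar C y) -> (z' == y) || (z' == bar C y) ->
  z = z'.
Proof.
move=> hrep Sy zX zX' hz hz'; apply/eqP/negPn/negP => nzz.
have : (#|[set z; z']| <= #|X :&: [set y; bar C y]|)%N.
  apply: subset_leq_card; apply/subsetP => w; rewrite !inE.
  by case/orP => /eqP ->; rewrite ?zX ?zX' /=.
by rewrite cards2 nzz hrep.
Qed.

Lemma rep_ex n (C : preClifford n) (S : pred 'I_n) (X : {set 'I_n}) y :
  (forall x, S x -> #|X :&: [set x; bar C x]| = 1%N) -> S y ->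
  exists2 z, z \in X & (z == y) || (z == bar C y).
Proof.
move=> hrep Sy; have /eqP /cards1P [z hz] := hrep y Sy.
have : z \in X :&: [set y; bar C y] by rewrite hz set11.
by rewrite !inE => /andP [zX hz']; exists z.
Qed.

Lemma orbit_unit n (C : preClifford n) (S : pred 'I_n) (X : {set 'I_n}) (W : 'M[algC]_#|X|) :
  (forall x, x \in X -> S x) ->
  (forall x, S x -> #|X :&: [set x; bar C x]| = 1%N) ->
  (forall x, S x -> S (dual C x)) ->
  (forall a b, (W a b != 0) =
     (enum_val b == dual C (enum_val a)) || (enum_val b == bar C (dual C (enum_val a)))) ->
  W \in unitmx.
Proof.
move=> hX hrep hd hW; apply: gperm_unit.
- move=> a; have Sy : S (dual C (enum_val a)) by apply/hd/hX/enum_valP.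
  have [z zX hz] := rep_ex hrep Sy.
  exists (enum_rank_in zX z); by rewrite hW enum_rankK_in.
- move=> a b b'; rewrite !hW => h1 h2; apply: enum_val_inj.
  apply: (rep_uniq hrep _ _ _ h1 h2) => //; try exact: enum_valP.
  by apply/hd/hX/enum_valP.
- move=> a a' b; rewrite !hW => h1 h2; apply: enum_val_inj.
  have conv x : (enum_val b == dual C x) || (enum_val b == bar C (dual C x)) ->
      (x == dual C (enum_val b)) || (x == bar C (dual C (enum_val b))).
    case/orP => /eqP hb; rewrite hb; first by rewrite dual_invol eqxx.
    by rewrite dual_bar dual_invol bar_invol eqxx orbT.
  apply: (rep_uniq hrep _ _ _ (conv _ h1) (conv _ h2)) => //; try exact: enum_valP.
  by apply/hd/hX/enum_valP.
Qed.

Lemma subSE n (C : preClifford n) X Y a b :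
  subS C X Y a b = smat C (enum_val a) (enum_val b).
Proof. by rewrite mxE. Qed.

Lemma subS_tr n (C : preClifford n) X Y : (subS C X Y)^T = subS C Y X.
Proof. by apply/matrixP => a b; rewrite [LHS]mxE !subSE s_symE. Qed.

Lemma subS_mul n (C : preClifford n) X Y Z a b :
  (subS C X Y *m subS C Y Z) a b =
  \sum_(k in Y) smat C (enum_val a) k * smat C k (enum_val b).
Proof.
rewrite mxE [in RHS]big_enum_val /=; apply: eq_bigr => k _; by rewrite !subSE.
Qed.

Lemma natsum_neq0 (x y : bool) : ((x%:R + y%:R : algC) != 0) = x || y.
Proof. by rewrite -natrD pnatr_eq0; case: x; case: y. Qed.

Lemma natdiff_neq0 (x y : bool) : ~~ (x && y) -> ((x%:R - y%:R : algC) != 0) = x || y.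
Proof.
case: x; case: y => //= _; rewrite ?subr0 ?sub0r ?oppr_eq0 ?oner_eq0 //.
by rewrite eqxx.
Qed.

Lemma bar_eq n (C : preClifford n) x y : (bar C x == y) = (x == bar C y).
Proof. by apply/eqP/eqP => [<-|->]; rewrite bar_invol. Qed.

Lemma dual_inj n (C : preClifford n) : injective (dual C).
Proof. exact: (can_inj (@dual_invol n C)). Qed.

Lemma Rp_sum n (C : preClifford n) (c : algC) (X : {set 'I_n}) i j :
  qdim C (vminus C) = 1 ->
  (forall i j, \sum_(k < n) smat C i k * smat C k j = c * (j == dual C i)%:R) ->
  Rreps C X -> mono C i = -1 -> mono C j = -1 ->
  \sum_(k in X) smat C i k * smat C k j
     = c / 4 * ((j == dual C i)%:R - (bar C j == dual C i)%:R).
Proof.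
move=> hd E hX hi hj.
have := @R_sum n C c X i j hd E hX; rewrite hi hj mulrNN mulr1 => /(_ erefl).
rewrite [X in _ + X = _]big1 ?addr0 => [h|k]; last first.
  by rewrite /R0set inE => /eqP hk; rewrite (s_fixed0 hd hi hk) mul0r.
move: h; set x := \sum_(k in X) _ => h.
have -> : x = (2 * x) / 2 by field.
rewrite h (_ : 4 = 2 * 2 :> algC); last by rewrite -natrM.
by field.
Qed.

Unset Implicit Arguments.

Theorem mainTheorem6 (n : nat) (C : preClifford n) (NSp Rp : {set 'I_n}) :
  qdim C (vminus C) = 1 ->
  NSreps C NSp -> Rreps C Rp ->
  [/\ forall i, i \in R0set C -> isR C i,
      (subS C NSp NSp)^T = subS C NSp NSp /\ subS C NSp NSp \in unitmx,
      (subS C Rp Rp)^T = subS C Rp Rp /\ subS C Rp Rp \in unitmx,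
      exists e : (#|Rp| + #|R0set C| = #|NSp|)%N,
        castmx (erefl #|NSp|, e)
          (row_mx (subS C NSp Rp) (subS C NSp (R0set C))) \in unitmx
    & (subS C NSp Rp)^T *m subS C NSp (R0set C) = 0].
Proof.
move=> hd hNS hRp; have [hNSX hNSrep] := hNS; have [hRX hRrep] := hRp.
have [c [c0 E]] := s_sq_c C.
have c4 : c / 4 != 0 by rewrite mulf_neq0 // invr_eq0 pnatr_eq0.
have c2 : c / 2 != 0 by rewrite mulf_neq0 // invr_eq0 pnatr_eq0.
have NSm x : x \in NSp -> mono C x = 1 by move/hNSX/eqP.
have Rm x : x \in Rp -> mono C x = -1 by move/hRX/andP => [/eqP].
have Rb x : x \in Rp -> bar C x != x by move/hRX/andP => [].
have R0b x : x \in R0set C -> bar C x = x by rewrite inE => /eqP.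
have R0m x : x \in R0set C -> mono C x = -1 by move/R0b/fixed_R.
have BD : (subS C NSp Rp)^T *m subS C NSp (R0set C) = 0.
  apply/matrixP => a b; rewrite subS_tr subS_mul mxE.
  have ha := enum_valP a; have hb := enum_valP b.
  rewrite (@NS_sum n C c NSp _ _ hd E hNS); last by rewrite (Rm _ ha) (R0m _ hb) mulrNN mulr1.
  rewrite (R0b _ hb).
  have -> : (enum_val b == dual C (enum_val a)) = false.
    apply/negbTE/eqP => e; move: (Rb _ ha); rewrite -[enum_val a](@dual_invol n C) -e.
    by rewrite -dual_bar (R0b _ hb) eqxx.
  by rewrite addr0 mulr0.
split => //.
- by move=> i /R0m /eqP.
- split; first exact: subS_tr.
  have : subS C NSp NSp *m subS C NSp NSp \in unitmx; last by rewrite unitmx_mul => /andP [].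
  apply: (@orbit_unit n C (isNS C) NSp) => //.
    by move=> x; rewrite /isNS mono_dual.
  move=> a b; rewrite subS_mul (@NS_sum n C c NSp _ _ hd E hNS); last first.
    by rewrite (NSm _ (enum_valP a)) (NSm _ (enum_valP b)) mulr1.
  by rewrite mulf_eq0 negb_or c4 /= natsum_neq0 bar_eq.
- split; first exact: subS_tr.
  have : subS C Rp Rp *m subS C Rp Rp \in unitmx; last by rewrite unitmx_mul => /andP [].
  apply: (@orbit_unit n C (fun x => isR C x && (bar C x != x)) Rp) => //.
    by move=> x /andP []; apply: hRrep.
    move=> x /andP [hx hb]; rewrite /isR mono_dual // -/(isR C x) hx /=.
    by rewrite -dual_bar (inj_eq (@dual_inj n C)).
  move=> a b; have ha := enum_valP a; have hb := enum_valP b.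
  rewrite subS_mul (@Rp_sum n C c Rp _ _ hd E hRp (Rm _ ha) (Rm _ hb)).
  rewrite mulf_eq0 negb_or c4 /= natdiff_neq0 ?bar_eq //.
  apply/negP => /andP [/eqP e1 /eqP e2]; move: (Rb _ hb).
  by rewrite {1}e1 -e2 eqxx.
set B := subS C NSp Rp; set D := subS C NSp (R0set C).
set M := row_mx B D.
have Uu : M *m col_mx (2 *: B^T) D^T \in unitmx.
  rewrite mul_row_col -scalemxAr.
  apply: (@orbit_unit n C (isNS C) NSp) => //.
    by move=> x; rewrite /isNS mono_dual.
  move=> a b; have ha := enum_valP a; have hb := enum_valP b.
  rewrite mxE; rewrite [X in X + _]mxE /B /D !subS_tr !subS_mul.
  rewrite (@R_sum n C c Rp _ _ hd E hRp); last by rewrite (NSm _ ha) (NSm _ hb) mulr1.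
  rewrite mulf_eq0 negb_or c2 /= natdiff_neq0 ?bar_eq //.
  apply/negP => /andP [/eqP e1 /eqP e2].
  have hf : bar C (enum_val b) = enum_val b by rewrite {1}e1 -e2.
  by move: (NSm _ hb); rewrite (fixed_R hf) => /eqP; rewrite -subr_eq0 -opprD oppr_eq0 (_ : 1 + 1 = 2 :> algC) // (negbTE two_neq0).
have Vu : M^T *m M \in unitmx.
  rewrite tr_row_mx mul_col_row.
  have DB : D^T *m B = 0 by rewrite -[B]trmxK -trmx_mul BD trmx0.
  rewrite DB unitmxE det_ublock unitfE mulf_eq0 negb_or -!unitfE -!unitmxE.
  apply/andP; split.
    rewrite /B !subS_tr.
    apply: (@orbit_unit n C (fun x => isR C x && (bar C x != x)) Rp) => //.
      by move=> x /andP []; apply: hRrep.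
      move=> x /andP [hx hb]; rewrite /isR mono_dual // -/(isR C x) hx /=.
      by rewrite -dual_bar (inj_eq (@dual_inj n C)).
    move=> a b; have ha := enum_valP a; have hb := enum_valP b.
    rewrite subS_mul (@NS_sum n C c NSp _ _ hd E hNS); last by rewrite (Rm _ ha) (Rm _ hb) mulrNN mulr1.
    by rewrite mulf_eq0 negb_or c4 /= natsum_neq0 bar_eq.
  rewrite /D !subS_tr.
  apply: (@orbit_unit n C (fun x => bar C x == x) (R0set C)) => //.
  - by move=> x; rewrite inE.
  - move=> x /eqP hx; rewrite hx setUid; apply/eqP/cards1P; exists x.
    by apply/setP => w; rewrite !inE; case: (w =P x) => [->|_]; rewrite ?hx ?eqxx ?andbF.
  - by move=> x /eqP hx; rewrite -dual_bar hx.
  move=> a b; have ha := enum_valP a; have hb := enum_valP b.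
  rewrite subS_mul (@NS_sum n C c NSp _ _ hd E hNS); last by rewrite (R0m _ ha) (R0m _ hb) mulrNN mulr1.
  by rewrite mulf_eq0 negb_or c4 /= natsum_neq0 bar_eq.
have rU := mxrank_unit Uu; have rV := mxrank_unit Vu.
have r1 := mxrankM_maxl M (col_mx (2 *: B^T) D^T).
have r2 := mxrankM_maxl M^T M.
rewrite mxrank_tr in r2.
have r3 := rank_leq_col M; have r4 := rank_leq_row M.
have e : (#|Rp| + #|R0set C| = #|NSp|)%N.
  apply/eqP; rewrite eqn_leq; apply/andP; split.
    by rewrite -rV; apply: leq_trans r2 r4.
  by rewrite -{1}rU; apply: leq_trans r1 r3.
exists e.
rewrite -unitmx_tr trmx_cast -row_full_unit row_full_castmx /row_full mxrank_tr.
apply/eqP; apply/eqP; rewrite eqn_leq r4 /=.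
by rewrite -{1}rU.
Qed.
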